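(* For every finite graph $G$, $\mathrm{mcw}(G) \leq \mathrm{tw}(G)+2$.
   Context: The tree-width $\mathrm{tw}(G)$ is the minimum width (largest bag size minus one) of a tree decomposition of $G$ (a tree $T$ with bags $B_i\subseteq V$ covering all vertices and all edges, such that for each vertex the nodes whose bags contain it form a connected subtree). A multi-$k$-expression is built as follows, where each vertex carries a (possibly empty) set of labels from $\{1,\dots,k\}$: atoms $m\langle i_1,\dots,i_\ell\rangle$ (with $m$ a positive integer and $i_1<\dots<i_\ell\le k$, possibly $\ell=0$) create $m$ vertices, each with label set $\{i_1,\dots,i_\ell\}$; $\eta_{i,j}$ creates an edge between every vertex having label $i$ and every vertex having label $j$, allowed only when no vertex has both labels $i$ and $j$; $\rho_{i\to S}$ for $S\subseteq\{1,\dots,k\}$ replaces label $i$ by the set $S$ (a vertex with label set $S'\ni i$ gets $(S'\setminus\{i\})\cup S$); $\varepsilon_i$ deletes label $i$ from all vertices; $\oplus$ is disjoint union. The generated graph is obtained by deleting all labels. The multi-clique-width $\mathrm{mcw}(G)$ is the smallest $k$ such that $G$ is generated by a multi-$k$-expression. *)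

(* Defs.v *)
From mathcomp Require Import all_boot.
Set Implicit Arguments. Unset Strict Implicit. Unset Printing Implicit Defensive.

Definition simple_graph (V : finType) (e : rel V) : Prop :=
  symmetric e /\ irreflexive e.

Definition is_tree (I : finType) (t : rel I) : Prop :=
  [/\ symmetric t, irreflexive t, 0 < #|I|,
      (forall x y : I, connect t x y) &
      (forall s : seq I, 3 <= size s -> uniq s -> ~~ cycle t s)].

Definition tree_decomposition (V : finType) (e : rel V)
    (I : finType) (t : rel I) (B : I -> {set V}) : Prop :=
  [/\ is_tree t,
      (forall v : V, exists i : I, v \in B i),
      (forall u v : V, e u v -> exists i : I, (u \in B i) && (v \in B i)) &
      (forall (v : V) (i j : I), v \in B i -> v \in B j ->
          connect [rel a b | [&& t a b, v \in B a & v \in B b]] i j)].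

Definition td_width (V I : finType) (B : I -> {set V}) : nat :=
  (\max_(i : I) #|B i|).-1.

Definition tw_le (V : finType) (e : rel V) (w : nat) : Prop :=
  exists (I : finType) (t : rel I) (B : I -> {set V}),
    tree_decomposition e t B /\ td_width B <= w.

(* Labels {1,...,k} are represented by 'I_k. *)
Inductive mexpr (k : nat) : Type :=
| MAtom  of nat & {set 'I_k}             (* m<S> : m vertices, label set S *)
| MEta   of 'I_k & 'I_k & mexpr k
| MRho   of 'I_k & {set 'I_k} & mexpr k
| MEps   of 'I_k & mexpr k
| MUnion of mexpr k & mexpr k.

(* A labelled graph with vertices 0, ..., n-1. *)
Record lgraph (k : nat) := LGraph {
  lg_n   : nat;
  lg_lab : nat -> {set 'I_k};
  lg_adj : nat -> nat -> bool }.

Fixpoint meval (k : nat) (x : mexpr k) : lgraph k :=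
  match x with
  | MAtom m L => LGraph m (fun _ => L) (fun _ _ => false)
  | MEta i j x1 =>
      let g := meval x1 in
      LGraph (lg_n g) (lg_lab g)
        (fun u v => [|| lg_adj g u v,
                        (i \in lg_lab g u) && (j \in lg_lab g v) |
                        (j \in lg_lab g u) && (i \in lg_lab g v)])
  | MRho i L x1 =>
      let g := meval x1 in
      LGraph (lg_n g)
        (fun u => if i \in lg_lab g u then (lg_lab g u :\ i) :|: L
                  else lg_lab g u)
        (lg_adj g)
  | MEps i x1 =>
      let g := meval x1 in
      LGraph (lg_n g) (fun u => lg_lab g u :\ i) (lg_adj g)
  | MUnion x1 x2 =>
      let g1 := meval x1 in
      let g2 := meval x2 in
      let n1 := lg_n g1 in
      LGraph (n1 + lg_n g2)
        (fun u => if u < n1 then lg_lab g1 u else lg_lab g2 (u - n1))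
        (fun u v => if (u < n1) && (v < n1) then lg_adj g1 u v
                    else if (n1 <= u) && (n1 <= v)
                         then lg_adj g2 (u - n1) (v - n1)
                         else false)
  end.

Fixpoint mvalid (k : nat) (x : mexpr k) : bool :=
  match x with
  | MAtom m _ => 0 < m
  | MEta i j x1 =>
      mvalid x1 &&
      [forall u : 'I_(lg_n (meval x1)),
         ~~ ((i \in lg_lab (meval x1) u) && (j \in lg_lab (meval x1) u))]
  | MRho _ _ x1 => mvalid x1
  | MEps _ x1 => mvalid x1
  | MUnion x1 x2 => mvalid x1 && mvalid x2
  end.

Definition mgenerates (k : nat) (x : mexpr k) (V : finType) (e : rel V) : Prop :=
  mvalid x /\
  exists f : V -> 'I_(lg_n (meval x)),
    bijective f /\ forall u v : V, e u v = lg_adj (meval x) (f u) (f v).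

Definition mcw_le (V : finType) (e : rel V) (k : nat) : Prop :=
  exists k', k' <= k /\ exists x : mexpr k', mgenerates x e.

(* Main.v *)
Require Import Defs.
From mathcomp Require Import all_boot.
Set Implicit Arguments. Unset Strict Implicit. Unset Printing Implicit Defensive.

Definition avoid (T : finType) (r : rel T) (i : T) : rel T :=
  [rel x y | [&& r x y, x != i & y != i]].

Lemma first_hit (T : finType) (r : rel T) a i :
  connect r a i -> a != i -> exists2 m, r m i & connect (avoid r i) a m.
Proof.
move/connectP=> [p pth lst].
elim: p a pth lst => [|y p IH] a /=; first by move=> _ ->; rewrite eqxx.
case/andP=> ray pth lst ai.
case: (eqVneq y i) => [yi|yi].
  by exists a; [rewrite -yi | exact: connect0].
have [m rmi cym] := IH y pth lst yi.
exists m => //; apply: connect_trans cym; apply: connect1.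
by apply/and3P.
Qed.

Lemma avoid_path_all (T : finType) (r : rel T) i x p :
  path (avoid r i) x p -> all (fun y => y != i) p.
Proof.
elim: p x => [|y p IH] x //=.
by case/andP=> /and3P[_ _ yi] /IH ->; rewrite yi.
Qed.

Lemma conn_to (T : finType) (r : rel T) i a : connect (avoid r i) a i -> a = i.
Proof.
move/connectP=> [p pth lst].
case/lastP: p pth lst => [|p y] //=.
rewrite rcons_path last_rcons => /andP[_ /and3P[_ _ yi]] ey.
by rewrite -ey eqxx in yi.
Qed.

Section Tree.
Variables (I : finType) (t : rel I).
Hypothesis tsym : symmetric t.
Hypothesis tirr : irreflexive t.
Hypothesis tcyc : forall s : seq I, 3 <= size s -> uniq s -> ~~ cycle t s.

Lemma avoid_sym i : connect_sym (avoid t i).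
Proof.
apply: sym_connect_sym => x y /=.
by rewrite /avoid /= tsym; case: (t y x); case: (x != i); case: (y != i).
Qed.

Lemma tl i n n' : t i n -> t i n' -> connect (avoid t i) n n' -> n = n'.
Proof.
move=> tin tin' /connectP[p pth lst].
apply/eqP; apply/negPn/negP=> nn'.
case: (shortenP pth) lst => p' pth' up' _ lst.
have ni : n != i by apply/negP=> /eqP E; rewrite E tirr in tin.
have H1 : 3 <= size (i :: n :: p').
  case: p' {pth' up'} lst => [|? ?] /=; last by [].
  by move=> E; rewrite E eqxx in nn'.
have H2 : uniq (i :: n :: p').
  rewrite cons_uniq up' andbT inE negb_or eq_sym ni /=.
  apply/negP=> /(allP (avoid_path_all pth')).
  by rewrite eqxx.
have H3 : cycle t (i :: n :: p').
  rewrite /= tin /= -cats1 cat_path /= andbT.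
  rewrite (sub_path _ pth') -?lst ?(tsym n') //.
  by move=> x y /and3P[].
by move: (tcyc H1 H2); rewrite H3.
Qed.

Lemma comp_exists a i :
  (forall x y : I, connect t x y) -> a != i ->
  exists2 n, t i n & connect (avoid t i) a n.
Proof.
move=> conn ai.
have [m tmi cm] := first_hit (conn a i) ai.
by exists m; rewrite // tsym.
Qed.

Lemma ctl i n a b : t i n -> connect (avoid t i) a n ->
  connect (avoid t n) a b -> connect (avoid t i) a b.
Proof.
move=> tin can /connectP[p pth lst]; subst b.
elim: p a can pth => [|y p IH] a can /=; first by move=> _; exact: connect0.
case/andP=> /and3P[tay an yn] pth.
have ai : a != i.
  apply/negP=> /eqP E; subst a.
  by move: can; rewrite (avoid_sym i) => /conn_to E; rewrite E tirr in tin.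
have yi : y != i.
  apply/negP=> /eqP E; subst y.
  have := @tl i a n _ tin can.
  rewrite tsym tay => /(_ isT).
  by move=> E; rewrite E eqxx in an.
have ay : avoid t i a y by apply/and3P.
have cyn : connect (avoid t i) y n.
  by apply: connect_trans can; rewrite avoid_sym; apply: connect1.
apply: connect_trans (IH y cyn pth); exact: connect1.
Qed.

End Tree.

Section Expr.
Variables (V : finType) (e : rel V).
Hypothesis esymm : symmetric e.
Hypothesis eirr : irreflexive e.
Variable w : nat.
Notation K := (w.+2).

Record realizes (x : mexpr K) (S : {set V}) (L : V -> {set 'I_K})
    (g : nat -> V) : Prop := Realizes {
  r_valid : mvalid x;
  r_inj : forall a b, a < lg_n (meval x) -> b < lg_n (meval x) -> g a = g b -> a = b;
  r_mem : forall a, a < lg_n (meval x) -> g a \in S;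
  r_surj : forall v, v \in S -> exists2 a, a < lg_n (meval x) & g a = v;
  r_adj : forall a b, a < lg_n (meval x) -> b < lg_n (meval x) ->
     lg_adj (meval x) a b = e (g a) (g b);
  r_lab : forall a, a < lg_n (meval x) -> lg_lab (meval x) a = L (g a) }.

Definition lab (c : V -> 'I_w.+1) (S : {set V}) (u : V) : {set 'I_K} :=
  [set lift ord0 (c y) | y in [set y | (y \notin S) && e u y]].

Lemma lab0 c S u : ord0 \notin lab c S u.
Proof. by apply/imsetP=> [[y _ E]]; move: (neq_lift ord0 (c y)); rewrite -E eqxx. Qed.

Lemma real_ext x S L L' g : realizes x S L g -> {in S, L =1 L'} ->
  realizes x S L' g.
Proof.
case=> h1 h2 h3 h4 h5 h6 E; split=> // a an.
by rewrite h6 // E // h3.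
Qed.

Lemma real_atom c v :
  realizes (MAtom 1 (lab c [set v] v)) [set v] (lab c [set v]) (fun _ => v).
Proof.
split=> //=.
- by move=> [|a] [|b].
- by move=> *; rewrite set11.
- by move=> u; rewrite inE => /eqP->; exists 0.
Qed.

Lemma real_union xP xQ P Q LP LQ L gP gQ :
  realizes xP P LP gP -> realizes xQ Q LQ gQ ->
  (forall u, u \in P -> u \in Q -> False) ->
  (forall u y, u \in P -> y \in Q -> e u y = false) ->
  {in P, LP =1 L} -> {in Q, LQ =1 L} ->
  realizes (MUnion xP xQ) (P :|: Q) L
    (fun a => if a < lg_n (meval xP) then gP a else gQ (a - lg_n (meval xP))).
Proof.
case=> vP iP mP sP aP lP [vQ iQ mQ sQ aQ lQ] dis noe LPE LQE.
set nP := lg_n (meval xP).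
have subK a : a < nP + lg_n (meval xQ) -> nP <= a -> a - nP < lg_n (meval xQ).
  by move=> h1 h2; rewrite ltn_subLR.
split=> /=.
- by rewrite vP vQ.
- move=> a b ha hb.
  case: (ltnP a nP) => an; case: (ltnP b nP) => bn.
  + exact: iP.
  + move=> E; case: (dis (gP a)); first exact: mP.
    by rewrite E; apply: mQ; apply: subK.
  + move=> E; case: (dis (gP b)); first exact: mP.
    by rewrite -E; apply: mQ; apply: subK.
  + move=> E; have := iQ _ _ (subK _ ha an) (subK _ hb bn) E.
    by move=> E2; rewrite -(subnK an) -(subnK bn) E2.
- move=> a ha; case: (ltnP a nP) => an.
  + by rewrite inE mP.
  + by rewrite inE mQ ?orbT //; apply: subK.
- move=> v; rewrite inE => /orP[vp|vq].
  + have [a an <-] := sP v vp; exists a; last by rewrite an.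
    exact: (leq_trans an (leq_addr _ _)).
  + have [a an <-] := sQ v vq; exists (a + nP).
      by rewrite addnC ltn_add2l.
    by rewrite ltnNge leq_addl /= addnK.
- move=> a b ha hb.
  case: (ltnP a nP) => an; case: (ltnP b nP) => bn /=.
  + exact: aP.
  + by rewrite noe //; [apply: mP | apply: mQ; apply: subK].
  + by rewrite esymm noe //; [apply: mP | apply: mQ; apply: subK].
  + exact: aQ (subK _ ha an) (subK _ hb bn).
- move=> a ha; case: (ltnP a nP) => an.
  + by rewrite lP // LPE // mP.
  + by rewrite lQ ?LQE //; [apply: mQ|]; apply: subK.
Qed.

Lemma lab_cv (c : V -> 'I_w.+1) (S : {set V}) (v u : V) : v \in S ->
  (forall y, y \notin S :\ v -> e u y -> c y = c v -> y = v) ->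
  (lift ord0 (c v) \in lab c (S :\ v) u) = e u v.
Proof.
move=> vS H; apply/imsetP/idP.
- case=> y; rewrite inE => /andP[yn euy] /lift_inj E.
  by rewrite -(H y yn euy (esym E)).
- move=> euv; exists v => //; rewrite inE euv andbT.
  by rewrite setD11.
Qed.

Lemma lab_rem (c : V -> 'I_w.+1) (S : {set V}) (v u : V) : v \in S ->
  (forall y, y \notin S :\ v -> e u y -> c y = c v -> y = v) ->
  lab c (S :\ v) u :\ lift ord0 (c v) = lab c S u.
Proof.
move=> vS H; apply/setP=> z; rewrite in_setD1; apply/andP/imsetP.
- case=> zn /imsetP[y]; rewrite inE => /andP[yn euy] zE.
  exists y => //; rewrite inE euy andbT.
  apply/negP=> yS; move: yn; rewrite in_setD1 yS andbT negbK => /eqP yv.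
  by move: zn; rewrite zE yv eqxx.
- case=> y; rewrite inE => /andP[yn euy] zE; split.
    apply/negP=> /eqP; rewrite zE => /lift_inj E.
    have yn' : y \notin S :\ v by rewrite in_setD1 negb_and yn orbT.
    have yv := H y yn' euy E.
    by rewrite yv vS in yn.
  apply/imsetP; exists y => //; rewrite inE euy andbT in_setD1 negb_and yn orbT //.
Qed.

Definition addx (x' : mexpr K) (c : V -> 'I_w.+1) (S : {set V}) (v : V) :=
  MRho ord0 (lab c S v) (MEps (lift ord0 (c v))
    (MEta ord0 (lift ord0 (c v)) (MUnion x' (MAtom 1 [set ord0])))).

Lemma real_add x' (c : V -> 'I_w.+1) (S : {set V}) (v : V) g' :
  v \in S -> realizes x' (S :\ v) (lab c (S :\ v)) g' ->
  (forall u y, u \in S :\ v -> y \notin S :\ v -> e u y -> c y = c v -> y = v) ->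
  realizes (addx x' c S v) S (lab c S)
    (fun a => if a < lg_n (meval x') then g' a else v).
Proof.
move=> vS [vx ix mx sx ax lx] H.
set n' := lg_n (meval x').
have sp a : a < n' + 1 -> a < n' \/ a = n'.
  by rewrite addn1 ltnS leq_eqVlt => /orP[/eqP->|]; [right|left].
have l0 a : a < n' -> ord0 \notin lg_lab (meval x') a.
  by move=> an; rewrite lx // lab0.
have gS a : a < n' -> g' a \in S :\ v := mx a.
set cv := lift ord0 (c v).
have cvn0 : (cv == ord0) = false by apply/negbTE; rewrite eq_sym neq_lift.
split=> /=.
- rewrite vx /=; apply/forallP=> u /=.
  case: (sp u (ltn_ord u)) => [un|->].
    by rewrite un (negbTE (l0 _ un)).
  by rewrite ltnn !inE cvn0 andbF.
- move=> a b ha hb.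
  have nv a0 : a0 < n' -> g' a0 <> v.
    by move=> h E; move: (gS _ h); rewrite E setD11.
  case: (sp a ha) => [an|->]; case: (sp b hb) => [bn|->]; rewrite ?an ?bn ?ltnn //.
  + exact: ix.
  + by move/nv.
  + by move/esym/nv.
- move=> a ha; case: (sp a ha) => [an|->]; rewrite ?an ?ltnn //.
  by move: (gS _ an); rewrite in_setD1 => /andP[].
- move=> u uS; case: (eqVneq u v) => [->|uv].
    by exists n'; rewrite ?addn1 ?ltnn.
  have uS' : u \in S :\ v by rewrite in_setD1 uv uS.
  have [a an E] := sx u uS'.
  by exists a; rewrite ?an // addn1 ltnS ltnW.
- rewrite -/n' => a b ha hb.
  case: (sp a ha) => [an|->]; case: (sp b hb) => [bn|->].
    rewrite an bn /= (negbTE (l0 a an)) (negbTE (l0 b bn)) /= andbF orbF.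
    exact: ax.
  + rewrite an ltnn andbF leqNgt an /= (negbTE (l0 a an)) /= inE eqxx andbT.
    by rewrite lx // lab_cv // => y; apply: (H (g' _)); apply: gS.
  + rewrite bn ltnn /= (negbTE (l0 b bn)) /= inE eqxx andbF /= orbF if_same.
    by rewrite (esymm v) lx // lab_cv // => y; apply: (H (g' _)); apply: gS.
    by rewrite ltnn /= !inE cvn0 /= eirr if_same.
- rewrite -/n' => a ha.
  case: (sp a ha) => [an|->].
    rewrite an in_setD1 (negbTE (l0 a an)) andbF.
    by rewrite lx // lab_rem // => y; apply: (H (g' _)); apply: gS.
  rewrite ltnn !inE eqxx eq_sym cvn0 /=.
  apply/setP=> z; rewrite !inE.
  by case: (eqVneq z ord0) => [->|] /=; rewrite ?lab0 ?andbF.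
Qed.

Lemma ext_col (X A : {set V}) (c : V -> 'I_w.+1) :
  #|X| <= w.+1 -> {in A &, injective c} ->
  exists c' : V -> 'I_w.+1, {in X &, injective c'} /\ {in X :&: A, c' =1 c}.
Proof.
move=> hX cinj.
set A' := X :&: A. set D := X :\: A.
set F := ~: (c @: A').
have cF : #|F| = w.+1 - #|A'|.
  rewrite cardsCs setCK card_ord card_in_imset //.
  by move=> u v /setIP[_ uA] /setIP[_ vA]; apply: cinj.
have cD : #|D| = #|X| - #|A'| by rewrite cardsD.
have DF : #|D| <= #|F| by rewrite cD cF leq_sub2r.
exists (fun v => if v \in D then nth ord0 (enum F) (index v (enum D)) else c v).
split.
- move=> u v uX vX /=.
  have iD z : z \in D -> index z (enum D) < size (enum F).
    by move=> zD; rewrite -cardE; apply: (leq_trans _ DF); rewrite cardE index_mem mem_enum.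
  have inF z : z \in D -> nth ord0 (enum F) (index z (enum D)) \in F.
    by move=> zD; rewrite -mem_enum mem_nth ?iD.
  have nA z : z \in X -> z \notin D -> c z \in c @: A'.
    move=> zX; rewrite inE zX andbT negbK => zA.
    by apply: imset_f; rewrite inE zX.
  case: ifP => uD; case: ifP => vD.
  + move/eqP; rewrite nth_uniq ?iD ?enum_uniq // => /eqP E.
    have uD' : u \in enum D by rewrite mem_enum.
    have vD' : v \in enum D by rewrite mem_enum.
    by rewrite -(nth_index u uD') E (nth_index u vD').
  + move=> E; have := inF u uD; rewrite E inE.
    by rewrite (nA v vX (negbT vD)).
  + move=> E; have := inF v vD; rewrite -E inE.
    by rewrite (nA u uX (negbT uD)).
  + apply: cinj.
    * by move: uD; rewrite inE uX andbT => /negbFE.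
    * by move: vD; rewrite inE vX andbT => /negbFE.
- move=> v /setIP[vX vA] /=.
  by rewrite inE vA.
Qed.

End Expr.

Lemma lab_eq (V : finType) (e : rel V) w (c c' : V -> 'I_w.+1) (S S' : {set V}) u :
  (forall y, (y \notin S) && e u y = (y \notin S') && e u y) ->
  (forall y, y \notin S' -> e u y -> c y = c' y) ->
  lab e c S u = lab e c' S' u.
Proof.
move=> H1 H2; rewrite /lab.
have -> : [set y | (y \notin S) && e u y] = [set y | (y \notin S') && e u y].
  by apply/setP=> y; rewrite !inE H1.
apply: eq_in_imset => y; rewrite inE => /andP[yn euy].
by rewrite (H2 y yn euy).
Qed.

Section Build.
Variables (V : finType) (e : rel V).
Hypothesis esymm : symmetric e.
Hypothesis eirr : irreflexive e.
Variable w : nat.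
Variables (I : finType) (t : rel I) (B : I -> {set V}).
Hypothesis tsym : symmetric t.
Hypothesis tirr : irreflexive t.
Hypothesis tcyc : forall s : seq I, 3 <= size s -> uniq s -> ~~ cycle t s.
Hypothesis tconn : forall x y : I, connect t x y.
Hypothesis cover : forall v : V, exists i : I, v \in B i.
Hypothesis edgeb : forall u v : V, e u v -> exists i : I, (u \in B i) && (v \in B i).
Hypothesis subt : forall (v : V) (i j : I), v \in B i -> v \in B j ->
          connect [rel a b | [&& t a b, v \in B a & v \in B b]] i j.
Hypothesis bsize : forall i, #|B i| <= w.+1.

Definition TS (S : {set V}) := [set a | [exists s in S, s \in B a]].
Definition RR (S : {set V}) i := [set b | [exists a in TS S, connect (avoid t i) a b]].
Definition mu (S : {set V}) i := #|I|.+2 * #|S| + #|RR S i| + (S :&: B i == set0).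

Lemma mu_lo (S : {set V}) (i : I) : #|I|.+2 * #|S| <= mu S i.
Proof. by rewrite /mu -addnA leq_addr. Qed.

Lemma mu_hi (S : {set V}) (i : I) : mu S i < #|I|.+2 * #|S|.+1.
Proof.
rewrite /mu mulnSr -addnA ltn_add2l.
have h : #|RR S i| <= #|I| := max_card _.
case: (_ == _); rewrite ?addn1 ?addn0.
  by rewrite !ltnS.
by rewrite ltnS ltnW.
Qed.

Lemma mu_dec (S S' : {set V}) (i i' : I) : #|S'| < #|S| -> mu S' i' < mu S i.
Proof.
move=> h; apply: (leq_trans (mu_hi S' i')); apply: leq_trans (mu_lo S i).
by rewrite leq_mul2l.
Qed.

Lemma mu_same (S : {set V}) (n i : I) :
  #|RR S n| + (S :&: B n == set0) < #|RR S i| + (S :&: B i == set0) ->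
  mu S n < mu S i.
Proof. by move=> h; rewrite /mu; move: (_ * _) => K; rewrite -!addnA ltn_add2l. Qed.

Lemma subtree_conn (s : V) (i a a' : I) : s \notin B i -> s \in B a -> s \in B a' ->
  connect (avoid t i) a a'.
Proof.
move=> si sa sa'; apply: connect_sub (subt sa sa') => x y /and3P[txy sx sy].
apply: connect1; apply/and3P; split=> //.
- by apply/negP=> /eqP E; rewrite -E sx in si.
- by apply/negP=> /eqP E; rewrite -E sy in si.
Qed.

Lemma build m : forall (S : {set V}) (i : I) (c : V -> 'I_w.+1),
  mu S i < m -> S != set0 ->
  (forall u y, u \in S -> y \notin S -> e u y -> y \in B i) ->
  {in B i &, injective c} ->
  exists x g, realizes e x S (lab e c S) g.
Proof.
elim: m => [//|m IH] S i c hmu S0 nb cinj.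
have hmu' : mu S i <= m by [].
have [/set0Pn [v /setIP[vS vB]] | /negPn/eqP SB0] := boolP (S :&: B i != set0).
- (* remove a vertex of the bag *)
  case: (eqVneq S [set v]) => [Sv | Sv].
    by exists (MAtom 1 (lab e c [set v] v)), (fun _ => v); rewrite Sv; apply: real_atom.
  have S'0 : S :\ v != set0.
    apply/negP=> /eqP E; move: Sv; rewrite -(setD1K vS) E setU0 eqxx.
    by [].
  have nb' : forall u y, u \in S :\ v -> y \notin S :\ v -> e u y -> y \in B i.
    move=> u y; rewrite !in_setD1 => /andP[uv uS] yn euy.
    case: (eqVneq y v) => [->//|yv].
    by apply: (nb u) => //; move: yn; rewrite yv.
  have mlt : mu (S :\ v) i < m.
    apply: leq_trans hmu'; apply: mu_dec.
    by rewrite (cardsD1 v S) vS.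
  have [x' [g' R']] := IH _ _ _ mlt S'0 nb' cinj.
  exists (addx e x' c S v), (fun a => if a < lg_n (meval x') then g' a else v).
  apply: real_add => // u y uS yn euy cyv.
  by apply: cinj => //; apply: (nb' u).
- (* split along the tree *)
  have notBi s : s \in S -> s \notin B i.
    by move=> sS; apply/negP=> sB; move: SB0 => /setP/(_ s); rewrite !inE sS sB.
  have [s0 s0S] := set0Pn _ S0.
  have [a0 s0a0] := cover s0.
  have a0i : a0 != i by apply/negP=> /eqP E; move: (notBi _ s0S); rewrite -E s0a0.
  have [n tin can0] := comp_exists tsym tconn a0i.
  set P := [set s in S | [exists a, (s \in B a) && connect (avoid t i) a n]].
  have PS s : s \in P -> s \in S by rewrite inE => /andP[].
  have F1 s a : s \in P -> s \in B a -> connect (avoid t i) a n.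
    rewrite inE => /andP[sS /existsP[a' /andP[sa' ca'n]]] sa.
    apply: connect_trans ca'n; exact: subtree_conn (notBi _ sS) sa sa'.
  have F2 u y : u \in P -> y \in S -> e u y -> y \in P.
    move=> uP yS euy; have [b /andP[ub yb]] := edgeb euy.
    by rewrite inE yS; apply/existsP; exists b; rewrite yb (F1 u b).
  have F3 u y : u \in P -> y \notin P -> e u y -> y \in B n.
    move=> uP yP euy.
    have yS : y \notin S by apply/negP=> yS; rewrite (F2 u y uP yS euy) in yP.
    have yBi : y \in B i := nb u y (PS _ uP) yS euy.
    have [b /andP[ub yb]] := edgeb euy.
    have cbn := F1 u b uP ub.
    have bi : b != i by apply/negP=> /eqP E; move: (notBi _ (PS _ uP)); rewrite -E ub.
    have [m' rm ca] := first_hit (subt yb yBi) bi.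
    move: rm => /and3P[tm ym _].
    have cbm : connect (avoid t i) b m'.
      apply: connect_sub ca => x z /and3P[/and3P[txz _ _] xi zi].
      by apply: connect1; apply/and3P.
    have tim : t i m' by rewrite tsym.
    have E : m' = n.
      apply: (tl tsym tirr tcyc tim tin).
      by apply: connect_trans cbn; rewrite avoid_sym.
    by rewrite -E.
  have [cn [cninj cnag]] := ext_col (bsize n) cinj.
  have cnE y : y \in B n -> y \in B i -> cn y = c y.
    by move=> h1 h2; apply: cnag; rewrite inE h1 h2.
  case: (eqVneq P S) => [PS' | PS'].
  + (* move to node n *)
    have nbn u y : u \in S -> y \notin S -> e u y -> y \in B n.
      by rewrite -PS'; apply: F3.
    have a0T : a0 \in TS S by rewrite inE; apply/existsP; exists s0; rewrite s0S.
    have Rsub : RR S n \subset RR S i.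
      apply/subsetP=> b; rewrite !inE => /existsP[a /andP[aT cab]].
      apply/existsP; exists a; rewrite aT /=.
      move: (aT); rewrite inE => /existsP[s /andP[sS sa]].
      have can : connect (avoid t i) a n by apply: (F1 s); rewrite ?PS'.
      exact: (ctl tsym tirr tcyc tin can cab).
    have mlt : mu S n < m.
      apply: leq_trans hmu'; apply: mu_same; rewrite SB0 eqxx.
      case: (eqVneq (S :&: B n) set0) => [SBn0|SBn].
        rewrite ?eqxx ltn_add2r; apply: proper_card.
        rewrite properEneq Rsub andbT; apply/negP=> /eqP E.
        have : n \in RR S i by rewrite inE; apply/existsP; exists a0; rewrite a0T can0.
        rewrite -E inE => /existsP[a /andP[aT can]].
        move/conn_to: can => an.
        move: aT; rewrite inE an => /existsP[s /andP[sS sn]].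
        by move: SBn0 => /setP/(_ s); rewrite !inE sS sn.
      by rewrite addn0 addn1 ltnS subset_leq_card.
    have [x [g R]] := IH _ _ _ mlt S0 nbn cninj.
    exists x, g; apply: (real_ext R) => u uS.
    apply: lab_eq => // y yn euy.
    exact: cnE (nbn u y uS yn euy) (nb u y uS yn euy).
  + set Q := S :\: P.
    have s0P : s0 \in P.
      by rewrite inE s0S; apply/existsP; exists a0; rewrite s0a0 can0.
    have P0 : P != set0 by apply/set0Pn; exists s0.
    have PsubS : P \subset S by apply/subsetP.
    have PpS : P \proper S by rewrite properEneq PS' PsubS.
    have [_ [z zS zP]] := properP PpS.
    have Q0 : Q != set0 by apply/set0Pn; exists z; rewrite in_setD zP zS.
    have cP : #|P| < #|S| by apply: proper_card.
    have cQ : #|Q| < #|S|.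
      apply: proper_card; apply/properP; split; first exact: subsetDl.
      by exists s0 => //; rewrite in_setD s0P.
    have mP : mu P n < m by apply: leq_trans hmu'; apply: mu_dec.
    have mQ : mu Q i < m by apply: leq_trans hmu'; apply: mu_dec.
    have nbQ u y : u \in Q -> y \notin Q -> e u y -> y \in B i.
      rewrite !in_setD negb_and negbK => /andP[uP uS] yQ euy.
      have yS : y \notin S.
        apply/negP=> yS; move: yQ; rewrite yS orbF => yP.
        by move: uP; rewrite (F2 y u yP uS) //; rewrite esymm.
      exact: nb u y uS yS euy.
    have [xP [gP RP]] := IH _ _ _ mP P0 F3 cninj.
    have [xQ [gQ RQ]] := IH _ _ _ mQ Q0 nbQ cinj.
    have SPQ : P :|: Q = S.
      apply/setP=> y; rewrite in_setU in_setD.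
      by case: (boolP (y \in P)) => yP /=; rewrite ?(PS _ yP).
    have RU := real_union esymm RP RQ (L := lab e c S).
    rewrite SPQ in RU.
    eexists; eexists; apply: RU.
    * by move=> u uP; rewrite in_setD uP.
    * move=> u y uP; rewrite in_setD => /andP[yP yS].
      by apply/negbTE/negP=> euy; rewrite (F2 u y uP yS euy) in yP.
    * move=> u uP; apply: lab_eq => y.
        case euy: (e u y); rewrite ?andbF ?andbT //.
        case: (boolP (y \in S)) => yS.
          by rewrite (F2 u y uP yS euy).
        by apply/negP=> yP; rewrite (PS _ yP) in yS.
      move=> yS euy.
      have yP : y \notin P by apply/negP=> yP; rewrite (PS _ yP) in yS.
      exact: cnE (F3 u y uP yP euy) (nb u y (PS _ uP) yS euy).
    * move=> u; rewrite in_setD => /andP[uP uS]; apply: lab_eq => // y.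
      case euy: (e u y); rewrite ?andbF ?andbT // in_setD negb_and negbK.
      case: (boolP (y \in S)) => yS; rewrite ?orbT ?orbF //.
      apply/negP=> yP; move: uP; rewrite (F2 y u yP uS) //.
      by rewrite esymm.
Qed.

End Build.

Unset Implicit Arguments.

Theorem mainTheorem5 (V : finType) (e : rel V) :
  simple_graph e -> 0 < #|V| ->
  forall w : nat, tw_le e w -> mcw_le e (w + 2).
Proof.
move=> [esymm eirr] V0 w [I [t [B [[[tsym tirr I0 tconn tcyc] cover edgeb subt] wd]]]].
have bsize i : #|B i| <= w.+1.
  have h1 := @leq_bigmax _ (fun j => #|B j|) i.
  have h2 : \max_(i : I) #|B i| <= w.+1.
    by move: wd; rewrite /td_width; case: (\max_(i : I) _).
  exact: leq_trans h1 h2.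
have [i0 _] := card_gt0P I0.
have [v0 _] := card_gt0P V0.
have inj0 : {in (set0 : {set V}) &, injective (fun _ : V => @ord0 w)}.
  by move=> u v; rewrite inE.
have [c [cinj _]] := ext_col (bsize i0) inj0.
have S0 : [set: V] != set0 by apply/set0Pn; exists v0; rewrite inE.
have nb u y : u \in [set: V] -> y \notin [set: V] -> e u y -> y \in B i0.
  by move=> _; rewrite in_setT.
have [x [g R]] := build esymm eirr tsym tirr tcyc tconn cover edgeb subt bsize
   (ltnSn _) S0 nb cinj.
exists w.+2; split; first by rewrite addn2.
exists x; split; first exact: r_valid R.
set n := lg_n (meval x).
pose h (a : 'I_n) : V := g a.
have hinj : injective h.
  by move=> a b /(r_inj R (ltn_ord a) (ltn_ord b)) E; apply: val_inj.
have hcard : #|V| <= #|'I_n|.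
  apply: leq_trans (leq_imset_card h (mem 'I_n)).
  rewrite -cardsT; apply: subset_leq_card; apply/subsetP=> v _.
  have [a an <-] := r_surj R (in_setT v).
  by apply/imsetP; exists (Ordinal an).
have [f hf fh] := inj_card_bij hinj hcard.
exists f; split; first by exists h.
move=> u v; rewrite (r_adj R (ltn_ord (f u)) (ltn_ord (f v))).
by have := fh u; have := fh v; rewrite /h => -> ->.
Qed.
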